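(* For all non-negative integers $m$ and $n$, \[ \overline{ {m+n \brack n} }_{q,t} = \sum_{k=0}^{\min\{m ,n \}} t^k q^{k(k+1)/2} (-1/t;q)_{k} {m \brack k}_{q} {n \brack k}_{q}. \]
   Context: An overpartition is a partition in which the last occurrence of each distinct part size may be overlined; its weight $|\lambda|$ is the sum of its parts. $\overline{{m+n \brack n}}_{q,t}=\sum_{\lambda} t^{\#_o(\lambda)} q^{|\lambda|}$, the sum over all overpartitions $\lambda$ with largest part at most $m$ and at most $n$ parts, $\#_o(\lambda)$ being the number of overlined parts. ${a \brack b}_q=\frac{(q;q)_{a}}{(q;q)_b(q;q)_{a-b}}$ is the Gaussian polynomial and $(x;q)_k=\prod_{j=1}^k(1-xq^{j-1})$; the product $t^k(-1/t;q)_k=\prod_{j=1}^k(t+q^{j-1})$ is a polynomial in $t$. *)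

(* Defs.v *)
From HB Require Import structures.
From mathcomp Require Import all_boot all_order all_algebra.
From mathcomp Require Import fraction.
Set Implicit Arguments. Unset Strict Implicit. Unset Printing Implicit Defensive.
Import GRing.Theory.
Local Open Scope ring_scope.

(* Bivariate integer polynomials Z[q][t]: the outer variable is t, the inner q. *)
Definition Zqt := {poly {poly int}}.
Definition Fqt := {fraction Zqt}.

Definition qv : Fqt := @FracField.tofrac Zqt (('X : {poly int})%:P).
Definition tv : Fqt := @FracField.tofrac Zqt ('X : Zqt).

Definition qpoch (x q : Fqt) (k : nat) : Fqt := \prod_(j < k) (1 - x * q ^+ j).

(* Gaussian polynomial [a choose b]_q (used for b <= a) *)
Definition gauss (a b : nat) : Fqt :=
  qpoch qv qv a / (qpoch qv qv b * qpoch qv qv (a - b)).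

(* An overpartition with largest part <= m and at most n parts is encoded as
   a nonincreasing n-tuple of parts in {0..m} (zeros = absent parts) together
   with the set S of distinct (nonzero) part sizes whose last occurrence is
   overlined.  Weight = sum of parts, #_o = #|S|. *)
Definition overpart_gf (m n : nat) : Fqt :=
  \sum_(l : n.-tuple 'I_m.+1 | sorted (fun a b : 'I_m.+1 => b <= a)%N l)
    \sum_(S : {set 'I_m.+1} | S \subset [set i in l | i != ord0 :> 'I_m.+1])
      tv ^+ #|S| * qv ^+ (\sum_(i <- l) (i : nat))%N.

(* Main.v *)
Require Import Defs.
From HB Require Import structures.
From mathcomp Require Import all_boot all_order all_algebra.
From mathcomp Require Import fraction.
From mathcomp Require Import ring zify.
Import GRing.Theory.
Local Open Scope ring_scope.
Lemma tv_neq0 : tv != 0.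
Proof. by rewrite /tv tofrac_eq0 polyX_eq0. Qed.

Lemma qv_neq0 : qv != 0.
Proof. by rewrite /qv tofrac_eq0 polyC_eq0 polyX_eq0. Qed.

Lemma qfac_neq0 j : 1 - qv ^+ j.+1 != 0.
Proof.
rewrite /qv -tofracXn -tofrac1 -tofracB tofrac_eq0 -rmorphXn -polyCB polyC_eq0.
apply/eqP => h; have := congr1 (fun p : {poly int} => p`_0) h.
by rewrite coefB coef1 coefXn /= coef0.
Qed.


Section Alg.
Context {F : fieldType} (q t : F).
Hypothesis hq : forall j, 1 - q ^+ j.+1 != 0.
Hypothesis ht : t != 0.

Definition gqp (x : F) (k : nat) : F := \prod_(j < k) (1 - x * q ^+ j).
Definition gg (a b : nat) : F := gqp q a / (gqp q b * gqp q (a - b)).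

Lemma qpoch_neq0 k : gqp q k != 0.
Proof.
rewrite /gqp prodf_seq_neq0; apply/allP => j _ /=.
by rewrite -exprS hq.
Qed.

Lemma qpochS k : gqp q k.+1 = gqp q k * (1 - q ^+ k.+1).
Proof. by rewrite /gqp big_ord_recr /= exprS. Qed.

Lemma qpoch0 x : gqp x 0 = 1.
Proof. by rewrite /gqp big_ord0. Qed.

Lemma gauss_n0 m : gg m 0 = 1.
Proof. by rewrite /gg subn0 qpoch0 mul1r divff // qpoch_neq0. Qed.

Lemma gauss_nn m : gg m m = 1.
Proof. by rewrite /gg subnn qpoch0 mulr1 divff // qpoch_neq0. Qed.

Lemma gauss_rec_abs (x y Pm Pk Pb : F) :
  Pk != 0 -> Pb != 0 -> 1 - x != 0 -> 1 - y != 0 ->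
  Pm * (1 - x * y) / (Pk * (1 - x) * (Pb * (1 - y))) =
  x * (Pm / (Pk * (1 - x) * Pb)) + Pm / (Pk * (Pb * (1 - y))).
Proof. move=> *; field; by apply/and4P. Qed.

Lemma gauss_rec m k : (k < m)%N -> gg m.+1 k.+1 = q ^+ k.+1 * gg m k.+1 + gg m k.
Proof.
move=> lt; rewrite /gg !subSS.
have -> : (m - k = (m - k.+1).+1)%N by rewrite subnSK.
rewrite !qpochS.
have e : (m = k.+1 + (m - k.+1))%N by rewrite subnKC.
have -> : q ^+ m.+1 = q ^+ k.+1 * q ^+ (m - k.+1).+1 by rewrite -exprD addnS -e.
by apply: gauss_rec_abs; rewrite ?qpoch_neq0 ?hq.
Qed.

Fixpoint B (m k : nat) : F :=
  match m, k with
  | _, 0 => 1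
  | 0, _.+1 => 0
  | m'.+1, k'.+1 => q ^+ k'.+1 * B m' k'.+1 + B m' k'
  end.

Lemma B_n0 m : B m 0 = 1. Proof. by case: m. Qed.

Lemma B_gt m k : (m < k)%N -> B m k = 0.
Proof.
elim: m k => [|m IH] [|k] //= lt.
by rewrite !IH ?mulr0 ?addr0 // ltnW.
Qed.

Lemma B_gauss m k : (k <= m)%N -> B m k = gg m k.
Proof.
elim: m k => [|m IH] [|k] //=; rewrite ?gauss_n0 // => le.
rewrite ltnS leq_eqVlt in le; case/orP: le => [/eqP -> | lt].
  by rewrite B_gt // mulr0 add0r IH // !gauss_nn.
by rewrite gauss_rec // !IH // ltnW.
Qed.

Lemma B_nn m : B m m = 1.
Proof. by rewrite B_gauss // gauss_nn. Qed.

Lemma P3_abs (Pm Pk Pb x y : F) :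
  Pk != 0 -> Pb != 0 -> 1 - x != 0 -> 1 - y != 0 ->
  Pm / (Pk * (1 - x) * Pb) * (1 - x) = Pm / (Pk * (Pb * (1 - y))) * (1 - y).
Proof. move=> *; field; by apply/and4P. Qed.

Lemma B_P3 m k : B m k.+1 * (1 - q ^+ k.+1) = B m k * (1 - q ^+ (m - k)).
Proof.
case: (ltnP k m) => lt.
  rewrite (B_gauss _ _ lt) (B_gauss _ _ (ltnW lt)) /gg.
  have -> : (m - k = (m - k.+1).+1)%N by rewrite subnSK.
  rewrite !qpochS; apply: P3_abs; by rewrite ?qpoch_neq0 ?hq.
rewrite B_gt ?ltnS // mul0r.
move: lt; rewrite -subn_eq0 => /eqP ->; by rewrite expr0 subrr mulr0.
Qed.

Lemma P1_abs (a b x y : F) :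
  b * (1 - x) = a * (1 - y) -> x * b + a = b + y * a.
Proof.
move=> h; apply/eqP; rewrite -subr_eq0.
have -> : x * b + a - (b + y * a) = a * (1 - y) - b * (1 - x) by ring.
by rewrite h subrr.
Qed.

Lemma B_P1 m k : B m.+1 k.+1 = B m k.+1 + q ^+ (m - k) * B m k.
Proof. by rewrite /=; apply: P1_abs; rewrite B_P3. Qed.

Definition c (k : nat) : F := t ^+ k * q ^+ ((k * k.+1) %/ 2)%N * gqp (- t^-1) k.

Lemma tri k : ((k.+1 * k.+2) %/ 2 = (k * k.+1) %/ 2 + k.+1)%N.
Proof.
have -> : (k.+1 * k.+2 = k.+1 * 2 + k * k.+1)%N by lia.
by rewrite divnMDl // addnC.
Qed.

Lemma c0 : c 0 = 1.
Proof. by rewrite /c qpoch0 !expr0 !mulr1. Qed.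

Lemma c_S_abs (T E Q1 P Q : F) :
  (t * T) * (E * Q1) * (P * (1 - - t^-1 * Q)) = T * E * P * (Q1 * (t + Q)).
Proof. by field. Qed.

Lemma c_S k : c k.+1 = c k * (q ^+ k.+1 * (t + q ^+ k)).
Proof.
by rewrite /c tri exprD /gqp big_ord_recr /= exprS c_S_abs.
Qed.


Lemma tele_abs (C X Y U V Q qa qb : F) : 1 - Q != 0 ->
  Y * (1 - Q) = X * (1 - q * qa) -> V * (1 - Q) = U * (1 - qb) ->
  C * ((Y + q * qa * X) * (V + qb * U) - Y * (V + qb * U)
       - Q * q * qa * (Y + q * qa * X) * V - t * (Q * q * qa) * Y * V)
  = q * qa * C * X * U - qa * (C * (q * Q * (t + Q))) * Y * V.
Proof.
move=> hQ h1 h2.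
have eY : Y = X * (1 - q * qa) / (1 - Q) by rewrite -h1 mulfK.
have eV : V = U * (1 - qb) / (1 - Q) by rewrite -h2 mulfK.
rewrite eY eV; field; exact: hQ.
Qed.

Definition D m n k := B m.+1 k * B n.+1 k - B m k * B n.+1 k
  - q ^+ m.+1 * B m.+1 k * B n k - t * q ^+ m.+1 * B m k * B n k.
Definition Ef m n k := match k with 0 => 0 | k'.+1 => q ^+ (m - k') * c k'.+1 * B m k' * B n k' end.

Lemma tele m n k : c k * D m n k = Ef m n k - Ef m n k.+1.
Proof.
case: k => [|k].
  rewrite /D /Ef /= c_S !c0 ?B_n0 subn0 expr1 expr0 exprS; ring.
case: (ltngtP m k) => [mk | km | <-].
- rewrite /D /Ef (B_gt _ _ mk) (B_gt _ _ (leqW mk)) (B_gt m.+1 k.+1 mk); ring.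
- rewrite /D /Ef (B_P1 m k) (B_P1 n k) (c_S k.+1).
  move: (B_P3 m k) (B_P3 n k).
  have [a ->] : exists a, m = (k + a.+1)%N by exists (m - k.+1)%N; lia.
  have -> : (k + a.+1 - k = a.+1)%N by lia.
  have -> : (k + a.+1 - k.+1 = a)%N by lia.
  have -> : q ^+ (k + a.+1).+1 = q ^+ k.+1 * q * q ^+ a by rewrite -exprSr -exprD; congr (_ ^+ _); lia.
  rewrite [q ^+ a.+1]exprS [q ^+ k.+2]exprS.
  move=> h1 h2; apply: tele_abs => //.
- rewrite /D /Ef (B_nn m.+1) (B_gt m m.+1 (ltnSn m)) (B_P1 n m) subnn expr0 (B_nn m).
  move: (B_P3 n m); set U := B n m; set V := B n m.+1; move=> h2.
  rewrite !mul0r !mulr0 !mul1r !mulr1 !subr0.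
  have -> : V + q ^+ (n - m) * U - q ^+ m.+1 * V - 0 * V
     = V * (1 - q ^+ m.+1) + q ^+ (n - m) * U by ring.
  rewrite h2; ring.
Qed.
Definition Rs N m n := \sum_(0 <= k < N) c k * B m k * B n k.

Lemma Rs_rec N m n : (m.+1 < N)%N ->
  Rs N m.+1 n.+1 = Rs N m n.+1 + q ^+ m.+1 * Rs N m.+1 n + t * q ^+ m.+1 * Rs N m n.
Proof.
move=> lt.
have E : Rs N m.+1 n.+1 - Rs N m n.+1 - q ^+ m.+1 * Rs N m.+1 n - t * q ^+ m.+1 * Rs N m n = 0.
  have -> : Rs N m.+1 n.+1 - Rs N m n.+1 - q ^+ m.+1 * Rs N m.+1 n - t * q ^+ m.+1 * Rs N m n
     = \sum_(0 <= k < N) c k * D m n k.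
    rewrite /Rs !mulr_sumr -!sumrB; apply: eq_bigr => k _; rewrite /D; ring.
  have -> : \sum_(0 <= k < N) c k * D m n k = - \sum_(0 <= k < N) (Ef m n k.+1 - Ef m n k).
    rewrite -sumrN; apply: eq_bigr => k _; rewrite tele opprB //.
  rewrite telescope_sumr //.
  case: N lt => [//|N] lt /=.
  by rewrite (B_gt m N) ?mulr0 ?mul0r ?subr0 ?oppr0.
apply/eqP; rewrite -subr_eq0; apply/eqP; rewrite -E; ring.
Qed.

Definition S m n := \sum_(0 <= k < (minn m n).+1) c k * gg m k * gg n k.

Lemma Rs_ext N m n : (minn m n < N)%N -> Rs N m n = S m n.
Proof.
move=> lt; rewrite /Rs /S (big_cat_nat (leq0n (minn m n).+1) lt) /=.
rewrite [X in _ + X]big1_seq ?addr0; last first.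
  move=> k /andP[_]; rewrite mem_index_iota => /andP[h _].
  have : (m < k)%N \/ (n < k)%N by lia.
  by case=> h'; rewrite (B_gt _ _ h') ?mulr0 ?mul0r.
apply: eq_big_nat => k /andP[_ hk].
rewrite !B_gauss //; lia.
Qed.

Lemma S_m0 m : S m 0 = 1.
Proof. by rewrite /S minn0 big_nat1 c0 !gauss_n0 !mulr1. Qed.

Lemma S_0n n : S 0 n = 1.
Proof. by rewrite /S min0n big_nat1 c0 !gauss_n0 !mulr1. Qed.

Lemma S_rec m n :
  S m.+1 n.+1 = S m n.+1 + q ^+ m.+1 * S m.+1 n + t * q ^+ m.+1 * S m n.
Proof.
rewrite -!(Rs_ext (m + n + 3)); try lia.
apply: Rs_rec; lia.
Qed.

End Alg.

Fixpoint dec (m : nat) : nat -> seq (seq nat) :=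
  fix decn (n : nat) :=
    match n with
    | 0 => [:: [::]]
    | n'.+1 => match m with
               | 0 => [:: nseq n 0%N]
               | m'.+1 => dec m' n ++ map (cons m) (decn n')
               end
    end.

Definition geqn := fun a b : nat => (b <= a)%N.

Lemma geqn_trans : transitive geqn.
Proof. by move=> x y z h1 h2; rewrite /geqn (leq_trans h2 h1). Qed.

Lemma sorted_nseq0 k : sorted geqn (nseq k 0%N).
Proof.
case: k => [//|k] /=; elim: k => [//|k IH] /=.
by rewrite IH.
Qed.

Lemma mem_cons_map (a b : nat) s' (L : seq (seq nat)) :
  (a :: s' \in map (cons b) L) = (a == b) && (s' \in L).
Proof.
apply/mapP/andP => [[x hx [-> ->]] | [/eqP -> h]]; first by rewrite eqxx.
by exists s'.
Qed.

Lemma mem_dec m n s :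
  (s \in dec m n) = [&& size s == n, sorted geqn s & all (fun x => x <= m)%N s].
Proof.
elim: m n s => [|m IHm] n.
  case: n => [|n] s; first by case: s.
  rewrite (_ : dec 0 n.+1 = [:: nseq n.+1 0%N]) // inE; apply/eqP/and3P => [-> | [/eqP sz _ al]].
    by rewrite size_nseq eqxx sorted_nseq0; split => //; apply/allP => x /nseqP[->].
  rewrite -sz; apply/all_pred1P; rewrite -(eq_all (a1 := fun x => x <= 0)%N) //.
  by move=> x /=; rewrite leqn0.
elim: n => [|n IHn] s; first by case: s.
case: s => [|a s'].
  by rewrite /= mem_cat; apply/negbTE; rewrite negb_or; apply/andP; split;
    [rewrite IHm | apply/mapP => -[]].
rewrite /= mem_cat IHm mem_cons_map IHn /= (path_sortedE geqn_trans).
case: (ltngtP a m.+1) => h.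
- rewrite -ltnS h /= orbF.
  case al: (all (geqn a) s'); rewrite ?andbF //=.
  have -> : all (fun x => x <= m)%N s'.
    by apply/allP => x hx; apply: leq_trans (allP al x hx) _; rewrite -ltnS.
  have -> : all (fun x => x <= m.+1)%N s'.
    by apply/allP => x hx; apply: leq_trans (allP al x hx) _; rewrite ltnW.
  by [].
- have -> : (a <= m)%N = false by apply/negbTE; rewrite -ltnNge ltnW.
  by rewrite !andbF.
- subst a; rewrite ltnn /=.
  have -> : all (geqn m.+1) s' = all (fun x => x <= m.+1)%N s' by [].
  rewrite andbF /= eqSS.
  by case: (size s' == n); case: (sorted geqn s'); case: (all _ s').
Qed.

Lemma dec_n0 m : dec m 0 = [:: [::]].
Proof. by case: m. Qed.

Lemma dec_SS m n : dec m.+1 n.+1 = dec m n.+1 ++ map (cons m.+1) (dec m.+1 n).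
Proof. by []. Qed.

Lemma uniq_dec m n : uniq (dec m n).
Proof.
elim: m n => [|m IHm] n; first by case: n.
elim: n => [//|n IHn].
rewrite dec_SS cat_uniq IHm map_inj_uniq ?IHn; last by move=> x y [].
rewrite andbT /=; apply/hasPn => s /mapP[s' _ ->].
by rewrite mem_dec /= ltnn !andbF.
Qed.

Lemma filter_dec m n :
  filter (fun s => m.+1 \notin s) (dec m.+1 n) = dec m n.
Proof.
case: n => [|n]; first by rewrite !dec_n0.
rewrite dec_SS filter_cat.
rewrite (_ : filter _ (map _ _) = [::]); last first.
  rewrite filter_map (@eq_filter _ _ pred0) ?filter_pred0 // => s /=.
  by rewrite in_cons eqxx.
rewrite cats0; apply/all_filterP/allP => s; rewrite mem_dec => /and3P[_ _ al].
apply/negP => hin; have := allP al _ hin; by rewrite ltnn.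
Qed.

Section Comb.
Context {F : comRingType} (q t : F).

Fixpoint wt (s : seq nat) : F :=
  match s with
  | [::] => 1
  | a :: s' => q ^+ a * (if (a != 0%N) && (a \notin s') then 1 + t else 1) * wt s'
  end.

Definition A m n := \sum_(s <- dec m n) wt s.

Lemma wt_nseq0 k : wt (nseq k 0%N) = 1.
Proof. by elim: k => [//|k IH] /=; rewrite IH expr0 !mul1r. Qed.

Lemma A_m0 m : A m 0 = 1.
Proof. by rewrite /A dec_n0 big_seq1. Qed.

Lemma A_0n n : A 0 n = 1.
Proof.
case: n => [|n]; first exact: A_m0.
by rewrite /A (_ : dec 0 n.+1 = [:: nseq n.+1 0%N]) // big_seq1 wt_nseq0.
Qed.

Lemma A_rec m n :
  A m.+1 n.+1 = A m n.+1 + q ^+ m.+1 * A m.+1 n + t * q ^+ m.+1 * A m n.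
Proof.
rewrite /A dec_SS big_cat big_map -addrA; congr (_ + _).
have -> : \sum_(s <- dec m.+1 n) wt (m.+1 :: s) =
  \sum_(s <- dec m.+1 n) (q ^+ m.+1 * wt s + t * q ^+ m.+1 * (if m.+1 \notin s then wt s else 0)).
  apply: eq_bigr => s _ /=; case: (m.+1 \notin s); ring.
rewrite big_split /= -!mulr_sumr -big_mkcond -big_filter filter_dec.
by [].
Qed.

Lemma sum_subset_exp (T : finType) (B : {set T}) (x : F) :
  \sum_(S : {set T} | S \subset B) x ^+ #|S| = (1 + x) ^+ #|B|.
Proof.
have E : \prod_i ((if i \in B then x else 0) + 1) =
  \sum_(J in {set T}) \prod_i (if i \in J then (if i \in B then x else 0) else 1)
  := @bigA_distr F 0 1 *%R +%R T (fun i => if i \in B then x else 0) (fun _ => 1).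
rewrite (_ : \prod_i _ = \prod_(i in B) (x + 1)) in E; last first.
  rewrite [RHS]big_mkcond; apply: eq_bigr => i _.
  by case: (i \in B); rewrite ?add0r.
rewrite prodr_const addrC in E; rewrite E.
rewrite [LHS]big_mkcond; apply: eq_bigr => S _.
case: (boolP (S \subset B)) => hS.
  rewrite -prodr_const [LHS]big_mkcond; apply: eq_bigr => i _.
  by case: (boolP (i \in S)) => // /(subsetP hS) ->.
case/subsetPn: hS => i iS iB.
by rewrite (bigD1 i) //= iS (negbTE iB) mul0r.
Qed.

Lemma wt_map m (l : seq 'I_m.+1) :
  (1 + t) ^+ #|[set i in l | i != ord0 :> 'I_m.+1]| * q ^+ (\sum_(i <- l) (i : nat))%N
  = wt (map val l).
Proof.
elim: l => [|a l IH].
  rewrite big_nil (_ : [set i in [::] | _] = set0); last by apply/setP => i; rewrite !inE.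
  by rewrite cards0 !expr0 mulr1.
rewrite big_cons exprD /= -IH.
have hm : (nat_of_ord a \in map (@nat_of_ord _) l) = (a \in l).
  by rewrite (mem_map (@ord_inj _)).
case: (eqVneq a ord0) => [-> | ha].
  rewrite (_ : [set i in _ | _] = [set i in l | i != ord0 :> 'I_m.+1]); last first.
    by apply/setP => i; rewrite !inE; case: (eqVneq i ord0) => [->|]; rewrite ?andbF ?andbT.
  have -> : q ^+ (@ord0 m) = 1 by rewrite expr0.
  have -> : (nat_of_ord (@ord0 m) != 0%N) = false by [].
  rewrite /=; ring.
rewrite (_ : [set i in _ | _] = a |: [set i in l | i != ord0 :> 'I_m.+1]); last first.
  apply/setP => i; rewrite !inE; case: (eqVneq i a) => [-> | //].
  by rewrite ha.
rewrite cardsU1 !inE ha andbT hm.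
case: (a \in l) => /=; rewrite ?add0n ?add1n ?exprS; ring.
Qed.

Lemma tuple_dec m n (f : seq nat -> F) :
  \sum_(l : n.-tuple 'I_m.+1 | sorted (fun a b : 'I_m.+1 => b <= a)%N l) f (map val l)
  = \sum_(s <- dec m n) f s.
Proof.
rewrite -big_filter.
rewrite -(big_map (fun l : n.-tuple 'I_m.+1 => map val (tval l)) xpredT f).
apply: perm_big; apply: uniq_perm.
- rewrite map_inj_uniq ?filter_uniq ?index_enum_uniq //.
  by move=> x y /(inj_map val_inj) /val_inj.
- exact: uniq_dec.
move=> s; apply/mapP/idP.
  case=> l; rewrite mem_filter => /andP[srt _] ->.
  rewrite mem_dec size_map size_tuple eqxx /= sorted_map srt /=.
  by apply/allP => x /mapP[i _ ->]; rewrite -ltnS ltn_ord.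
rewrite mem_dec => /and3P[/eqP sz srt al].
have hsz : size (map (@inord m) s) == n by rewrite size_map sz.
have E : map val (Tuple hsz) = s.
  rewrite /= -map_comp; apply: map_id_in => x hx /=.
  by rewrite inordK // ltnS (allP al x hx).
exists (Tuple hsz); last by rewrite E.
rewrite mem_filter mem_index_enum andbT.
by have := srt; rewrite -{1}E sorted_map.
Qed.

End Comb.

Lemma A_S (F : fieldType) (q t : F) (hq : forall j, 1 - q ^+ j.+1 != 0) (ht : t != 0) m n :
  A q t m n = S q t m n.
Proof.
elim: m n => [|m IHm] n; first by rewrite A_0n S_0n.
elim: n => [|n IHn]; first by rewrite A_m0 S_m0.
by rewrite A_rec (S_rec _ _ hq ht) IHn !IHm.
Qed.

Theorem proposition2p5 (m n : nat) :
  overpart_gf m n =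
  \sum_(0 <= k < (minn m n).+1)
    tv ^+ k * qv ^+ ((k * k.+1) %/ 2)%N * qpoch (- tv^-1) qv k
      * gauss m k * gauss n k.
Proof.
have hq : forall j, 1 - qv ^+ j.+1 != 0 := qfac_neq0.
have ht := tv_neq0.
transitivity (A qv tv m n).
  rewrite /overpart_gf.
  under eq_bigr => l _ do rewrite -mulr_suml sum_subset_exp wt_map.
  exact: tuple_dec.
rewrite (A_S _ _ _ hq ht).
reflexivity.
Qed.
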